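(* Let $p$ be a prime, $m=p^2$, and $n,k$ positive integers with $(m,k-1)=1$ and $n=\mathrm{ind}_m(k)$; let $G=G(p^2,n,k)=\langle a,b;\ a^{p^2}=1,\ b^n=1,\ b^{-1}ab=a^k\rangle$. Then the right commutation semigroup $\mathrm{P}(G)$ and the left commutation semigroup $\Lambda(G)$ are complete, i.e. $\Sigma_G(R)$ and $\Sigma_G(L)$ are complete, where $R=\{k^j-1 \bmod m: j\in\mathbb{Z}_n\}$ and $L=\{1-k^j \bmod m: j\in\mathbb{Z}_n\}$.
   Context: $\mathrm{ind}_m(k)$ is the least positive integer $d$ with $k^d\equiv 1\pmod m$. Elements of $G$ are written uniquely as $a^ib^j$, $i\in\mathbb{Z}_m$, $j\in\mathbb{Z}_n$; $k_t=k^t-1\pmod m$. Commutators are $[x,y]=x^{-1}y^{-1}xy$; for $g\in G$, $\rho(g),\lambda(g):G\to G$ are $(x)\rho(g)=[x,g]$ and $(x)\lambda(g)=[g,x]$; maps are written on the right and composed left to right. $\mathrm{P}(G)$ and $\Lambda(G)$ are the semigroups under composition generated by $\{\rho(g)\}$ and $\{\lambda(g)\}$; they equal $\Sigma_G(R)$ and $\Sigma_G(L)$ respectively. For $x,y\in\mathbb{Z}_m$, $\mu(x,y):G\to G$ is $(a^ib^j)\mu(x,y)=a^{xik^j-yk_j}$, and $C(x,y)=\{\mu(x,yz):z\in\mathbb{Z}_m\}$. For $S\subseteq\mathbb{Z}_m$, $I(S)$ is the set of elements of $S$ invertible in $\mathbb{Z}_m$, and $S^*$ is the multiplicative subsemigroup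 generated by $S$. A base is $S\subseteq\mathbb{Z}_m$ with $0\in S$, $I(S)\ne\varnothing$. $\Sigma_G(S)$ is the semigroup generated by $\{\mu(s,z):s\in S,z\in\mathbb{Z}_m\}$. For $x\in S^*$, $Y(x)=\{s^*z: s^*\in S^*, z\in\mathbb{Z}_m, \exists s\in S,\ x\equiv ss^*\pmod m\}$; the $x$-family $\{C(x,y):y\in Y(x)\}$ is complete if it contains $C(x,1)$, and $\Sigma_G(S)$ is complete if every $x$-family ($x\in S^*$) is complete. *)

(* Defs.v *)
From mathcomp Require Import all_boot all_order all_algebra.
Unset Printing Implicit Defensive.
Import GRing.Theory.
Local Open Scope ring_scope.

Definition is_ind (m k d : nat) : Prop :=
  (0 < d)%N /\ (k ^ d = 1 %[mod m])%N /\
  (forall d' : nat, (0 < d')%N -> (k ^ d' = 1 %[mod m])%N -> (d <= d')%N).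

(* An element a^i b^j of G(m,n,k) is represented by the pair (i, j),
   i : 'Z_m, j : 'I_n (the unique normal form).  A map G -> G whose
   values lie in <a> is represented by i j |-> exponent of a. *)

Definition kt (m k : nat) (t : nat) : 'Z_m := (k%:R) ^+ t - 1.

(* (a^i b^j) mu(x,y) = a^(x i k^j - y k_j) *)
Definition mu (m n k : nat) (x y : 'Z_m) (i : 'Z_m) (j : 'I_n) : 'Z_m :=
  x * i * (k%:R) ^+ j - y * kt m k j.

(* C(x,y1) = C(x,y2) as sets of maps G -> G, where
   C(x,y) = { mu(x, y z) : z in Z_m } *)
Definition C_eq (m n k : nat) (x y1 y2 : 'Z_m) : Prop :=
  (forall z : 'Z_m, exists z' : 'Z_m,
      forall i j, mu m n k x (y1 * z) i j = mu m n k x (y2 * z') i j) /\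
  (forall z' : 'Z_m, exists z : 'Z_m,
      forall i j, mu m n k x (y2 * z') i j = mu m n k x (y1 * z) i j).

Inductive in_star (m : nat) (S : 'Z_m -> Prop) : 'Z_m -> Prop :=
  | star_gen s : S s -> in_star m S s
  | star_mul a b : in_star m S a -> in_star m S b -> in_star m S (a * b).

Definition in_Y (m : nat) (S : 'Z_m -> Prop) (x y : 'Z_m) : Prop :=
  exists (st z : 'Z_m), in_star m S st /\ (exists s, S s /\ x = s * st) /\ y = st * z.

(* the x-family {C(x,y) : y in Y(x)} is complete: it contains C(x,1) *)
Definition family_complete (m n k : nat) (S : 'Z_m -> Prop) (x : 'Z_m) : Prop :=
  exists y : 'Z_m, in_Y m S x y /\ C_eq m n k x y 1.

Definition Sigma_complete (m n k : nat) (S : 'Z_m -> Prop) : Prop :=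
  forall x : 'Z_m, in_star m S x -> family_complete m n k S x.

Definition Rset (m n k : nat) : 'Z_m -> Prop :=
  fun r => exists j : 'I_n, r = (k%:R) ^+ j - 1.
Definition Lset (m n k : nat) : 'Z_m -> Prop :=
  fun r => exists j : 'I_n, r = 1 - (k%:R) ^+ j.

(* Main.v *)
Require Import Defs.
From mathcomp Require Import all_boot all_order all_algebra all_fingroup.
From mathcomp Require Import ring.
Local Open Scope ring_scope.
Import GRing.Theory.

Lemma unit_pow (R : finUnitRingType) (u : R) :
  u \is a GRing.unit -> exists N, (0 < N)%N /\ u ^+ N = 1.
Proof.
move=> Hu.
pose w : {unit R} := Sub u Hu.
exists #[w]%g; split; first exact: order_gt0.
have := congr1 val (expg_order w).
by rewrite FinRing.val_unitX FinRing.val_unit1.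
Qed.

Lemma star_pow m (S : 'Z_m -> Prop) u N :
  in_star m S u -> (0 < N)%N -> in_star m S (u ^+ N).
Proof.
move=> Hu; elim: N => // N IH _.
case: N IH => [|N] IH; first by rewrite expr1.
by rewrite exprS; apply: star_mul => //; apply: IH.
Qed.

Lemma nonunit_mul0 p (a b : 'Z_(p ^ 2)) : prime p ->
  a \isn't a GRing.unit -> b \isn't a GRing.unit -> a * b = 0.
Proof.
move=> pp Ha Hb.
have hm : (1 < p ^ 2)%N.
  by rewrite (ltn_exp2l 0 2) ?prime_gt1.
have dv : forall x : 'Z_(p ^ 2), x \isn't a GRing.unit -> (p %| x)%N.
  move=> x; have e : x = (x : nat)%:R :> 'Z_(p ^ 2) by rewrite natr_Zp.
  rewrite {1}e unitZpE // coprime_pexpl //.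
  by rewrite prime_coprime // negbK.
rewrite -(natr_Zp a) -(natr_Zp b) -natrM -Zp_nat_mod //.
have : (p ^ 2 %| a * b)%N.
  apply: (dvdn_trans _ (dvdn_mul (dv a Ha) (dv b Hb))).
  by rewrite expnS expn1.
by rewrite /dvdn => /eqP ->.
Qed.

Lemma decomp p (S : 'Z_(p ^ 2) -> Prop) : prime p -> S 0 -> in_star _ S 1 ->
  forall x, in_star _ S x -> exists s st, S s /\ in_star _ S st /\
    st \is a GRing.unit /\ x = s * st.
Proof.
move=> pp S0 S1 x; elim => [s Hs|a b _ [s1 [t1 [H1 [T1 [U1 ->]]]]] _ [s2 [t2 [H2 [T2 [U2 ->]]]]]].
  by exists s, 1; rewrite mulr1 unitr1.
case: (boolP (s2 \is a GRing.unit)) => u2.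
  exists s1, (t1 * (s2 * t2)); split => //; split.
    by apply: star_mul => //; apply: star_mul => //; apply: star_gen.
  by rewrite !unitrM u2 U2 U1; split => //; rewrite !mulrA.
case: (boolP (s1 \is a GRing.unit)) => u1.
  exists s2, (s1 * t1 * t2); split => //; split.
    by apply: star_mul => //; apply: star_mul => //; apply: star_gen.
  by rewrite !unitrM u1 U2 U1; split => //; ring.
exists 0, 1; split => //; split => //; rewrite unitr1; split => //.
transitivity (s1 * s2 * (t1 * t2)); first by ring.
by rewrite (nonunit_mul0 p s1 s2 pp u1 u2) !mul0r.
Qed.

Lemma complete_of p n k (S : 'Z_(p ^ 2) -> Prop) : prime p -> S 0 ->
  (exists u, S u /\ u \is a GRing.unit) -> Sigma_complete (p ^ 2) n k S.
Proof.
move=> pp S0 [u [Su Uu]].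
have S1 : in_star _ S 1.
  have [N [N0 <-]] := unit_pow _ u Uu.
  by apply: star_pow => //; apply: star_gen.
move=> x Hx.
have [s [st [Ss [Tst [Ust ->]]]]] := decomp p S pp S0 S1 x Hx.
exists 1; split.
  exists st, st^-1; split => //; split; first by exists s.
  by rewrite divrr.
by split=> z; exists z.
Qed.

Theorem theorem6p3 (p n k : nat) :
  prime p -> (0 < n)%N -> (0 < k)%N ->
  coprime (p ^ 2) (k - 1) ->
  is_ind (p ^ 2) k n ->
  Sigma_complete (p ^ 2) n k (Rset (p ^ 2) n k) /\ Sigma_complete (p ^ 2) n k (Lset (p ^ 2) n k).
Proof.
move=> pp n0 k0 cop [_ [hkn _]].
have hm : (1 < p ^ 2)%N by rewrite (ltn_exp2l 0 2) ?prime_gt1.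
set u : 'Z_(p ^ 2) := (k%:R) ^+ 1 - 1.
have eu : u = (k - 1)%:R by rewrite /u expr1 natrB.
have Uu : u \is a GRing.unit by rewrite eu unitZpE.
have n1 : (1 < n)%N.
  case: n n0 hkn => [|[|n]] // _ hkn.
  move: Uu; rewrite /u expr1 -(Zp_nat_mod hm) hkn Zp_nat_mod // subrr.
  by rewrite unitr0.
split; apply: complete_of => //.
- by exists (Ordinal n0); rewrite /= expr0 subrr.
- by exists u; split => //; exists (Ordinal n1).
- by exists (Ordinal n0); rewrite /= expr0 subrr.
- exists (- u); split; last by rewrite unitrN.
  by exists (Ordinal n1); rewrite /u opprB.
Qed.
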